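(* Let $G$ be an abelian group and let $(a_n)_{n\in\omega}$ be a $T$-sequence in $G$. Put $A=\{0,a_n,-a_n : n\in\omega\}$ and let $A_n$ denote the sum of $n$ copies of $A$. Then the family $\{F+A_n : F\in[G]^{<\omega},\ n\in\omega\}$ is a base for the group ideal $\mathcal{C}_{\tau(a_n)}$ (i.e. each $F+A_n$ belongs to $\mathcal{C}_{\tau(a_n)}$ and every member of $\mathcal{C}_{\tau(a_n)}$ is contained in some $F+A_n$), and $\mathcal{C}_{\tau(a_n)}=\mathcal{S}_{\tau(a_n)}$. If moreover $G$ is generated by $\{a_n:n\in\omega\}$, then $\{A_n:n\in\omega\}$ is a base for $\mathcal{C}_{\tau(a_n)}$.
   Context: A sequence $(a_n)_{n\in\omega}$ in an abelian group $G$ is a $T$-sequence if there exists a Hausdorff group topology on $G$ in which $(a_n)$ converges to $0$; $\tau(a_n)$ denotes the strongest group topology on $G$ in which $(a_n)$ converges to $0$. $[G]^{<\omega}$ is the family of finite subsets of $G$. For a topological group $(G,\tau)$, $\mathcal{C}_\tau$ is the family of precompact subsets of $G$ (subsets with compact closure), and $\mathcal{S}_\tau$ is the smallest group ideal on $G$ containing every set of the form $\{x\}\cup\{x_n:n\in\omega\}$ where $(x_n)$ is a sequence converging to $x$ in $(G,\tau)$. A group ideal on a group $G$ is a family $\mathcal{I}$ of subsets of $G$ containing all finite subsets and such that $A,B\in\mathcal{I}$, $C\subseteq A$ imply $AB^{-1}\in\mathcal{I}$ and $C\in\mathcal{I}$. *)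

(* Defs.v *)
From HB Require Import structures.
From mathcomp Require Import all_boot all_algebra.
From Stdlib Require List.
Set Implicit Arguments. Unset Strict Implicit. Unset Printing Implicit Defensive.
Import GRing.Theory.
Local Open Scope ring_scope.

Definition gset (T : Type) := T -> Prop.

Definition finite_set (G : eqType) (X : gset G) : Prop :=
  exists s : seq G, forall x, X x <-> x \in s.

Definition is_topology (T : Type) (O : gset (gset T)) : Prop :=
  O (fun _ => True) /\
  (forall U V, O U -> O V -> O (fun x => U x /\ V x)) /\
  (forall F : gset (gset T), (forall U, F U -> O U) ->
     O (fun x => exists U, F U /\ U x)).

(* group topology on an abelian group: (x,y) |-> x - y is continuous
   (continuity w.r.t. the product topology, at every point) *)
Definition group_topology (G : zmodType) (O : gset (gset G)) : Prop :=
  is_topology O /\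
  forall x y (W : gset G), O W -> W (x - y) ->
    exists U V, [/\ O U, O V, U x, V y &
      forall u v, U u -> V v -> W (u - v)].

Definition hausdorff (T : Type) (O : gset (gset T)) : Prop :=
  forall x y, x <> y -> exists U V, [/\ O U, O V, U x, V y &
      forall z, U z -> V z -> False].

Definition converges (T : Type) (O : gset (gset T)) (s : nat -> T) (l : T) : Prop :=
  forall U, O U -> U l -> exists N, forall n, (N <= n)%N -> U (s n).

Definition T_sequence (G : zmodType) (a : nat -> G) : Prop :=
  exists O, [/\ group_topology O, hausdorff O & converges O a 0].

Definition is_tau (G : zmodType) (a : nat -> G) (O : gset (gset G)) : Prop :=
  [/\ group_topology O, converges O a 0 &
    forall O', group_topology O' -> converges O' a 0 ->
      forall U, O' U -> O U].

Definition closure (T : Type) (O : gset (gset T)) (X : gset T) : gset T :=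
  fun x => forall U, O U -> U x -> exists y, U y /\ X y.

Definition compact (T : Type) (O : gset (gset T)) (K : gset T) : Prop :=
  forall F : gset (gset T), (forall U, F U -> O U) ->
    (forall x, K x -> exists U, F U /\ U x) ->
    exists s : list (gset T),
      (forall U, List.In U s -> F U) /\
      (forall x, K x -> exists U, List.In U s /\ U x).

(* C_tau : precompact subsets (compact closure) *)
Definition precompact (T : Type) (O : gset (gset T)) (X : gset T) : Prop :=
  compact O (closure O X).

Definition group_ideal (G : zmodType) (I : gset (gset G)) : Prop :=
  [/\ forall X, finite_set X -> I X,
      forall A B, I A -> I B -> I (fun z => exists x y, [/\ A x, B y & z = x - y])
    & forall A C, I A -> (forall z, C z -> A z) -> I C].

(* S_tau : smallest group ideal containing {x} u {x_n} for x_n -> x *)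
Definition S_ideal (G : zmodType) (O : gset (gset G)) : gset (gset G) :=
  fun X => forall I, group_ideal I ->
    (forall (s : nat -> G) (l : G), converges O s l ->
        I (fun z => z = l \/ exists n, z = s n)) ->
    I X.

Definition Aset (G : zmodType) (a : nat -> G) : gset G :=
  fun z => z = 0 \/ exists n, z = a n \/ z = - a n.

Fixpoint Asum (G : zmodType) (a : nat -> G) (n : nat) : gset G :=
  match n with
  | 0 => fun z => z = 0
  | m.+1 => fun z => exists x y, [/\ Aset a x, Asum a m y & z = x + y]
  end.

Definition plus_set (G : zmodType) (F X : gset G) : gset G :=
  fun z => exists f x, [/\ F f, X x & z = f + x].

Definition generated_by (G : zmodType) (a : nat -> G) : Prop :=
  forall H : gset G, H 0 -> (forall x y, H x -> H y -> H (x - y)) ->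
    (forall n, H (a n)) -> forall x, H x.

(* Main.v *)
Require Import Defs.
From HB Require Import structures.
From mathcomp Require Import all_boot all_algebra.
From Stdlib Require Import Classical FunctionalExtensionality PropExtensionality ClassicalEpsilon.
From Stdlib Require List.
Import Defs.
Set Implicit Arguments. Unset Strict Implicit. Unset Printing Implicit Defensive.
Import GRing.Theory.
Local Open Scope ring_scope.


Lemma gset_ext (T : Type) (P Q : gset T) : (forall x, P x <-> Q x) -> P = Q.
Proof.
move=> H; apply: functional_extensionality => x.
by apply: propositional_extensionality.
Qed.

Lemma open_local (T : Type) (O : gset (gset T)) (P : gset T) :
  is_topology O ->
  (forall x, P x -> exists U, [/\ O U, U x & forall z, U z -> P z]) -> O P.
Proof.
move=> [_ [_ Hun]] H.
have -> : P = (fun x => exists U, (O U /\ forall z, U z -> P z) /\ U x).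
  apply: gset_ext => x; split.
  - by move=> /H [U [OU Ux HU]]; exists U.
  - by move=> [U [[_ HU] Ux]]; apply: HU.
by apply: Hun => U [].
Qed.


Lemma list_filter_ex (A : Type) (P : A -> Prop) (s : list A) :
  exists s', (forall U, List.In U s' -> P U) /\ (forall U, List.In U s -> P U -> List.In U s').
Proof.
elim: s => [|x s [s' [H1 H2]]]; first by exists nil.
case: (classic (P x)) => Px.
- exists (x :: s'); split.
  + by move=> U [<-|/H1].
  + by move=> U [<-|Us] PU; [left|right; apply: H2].
- exists s'; split => // U [<-|Us] PU //; by apply: H2.
Qed.

Lemma closure_compl (T : Type) (O : gset (gset T)) (X : gset T) x :
  ~ closure O X x -> exists U, [/\ O U, U x & forall z, U z -> ~ closure O X z].
Proof.
move=> H.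
have [U HU] : exists U, ~ (O U -> U x -> exists y, U y /\ X y).
  by apply: not_all_ex_not.
have OU : O U by apply: NNPP => nO; apply: HU.
have Ux : U x by apply: NNPP => nU; apply: HU.
exists U; split => // z Uz cz.
have [y [Uy Xy]] := cz U OU Uz.
by apply: HU => _ _; exists y.
Qed.

Lemma closed_sub_compact (T : Type) (O : gset (gset T)) (C D : gset T) :
  compact O C -> (forall x, D x -> C x) ->
  (forall x, ~ D x -> exists U, [/\ O U, U x & forall z, U z -> ~ D z]) ->
  compact O D.
Proof.
move=> HC HDC Hcl; rewrite /compact => F HF Hcov.
pose F' := (fun U => F U \/ (O U /\ forall z, U z -> ~ D z)).
have HF' : forall U, F' U -> O U by move=> U [/HF|[]].
have Hc' : forall x, C x -> exists U, F' U /\ U x.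
  move=> x Cx; case: (classic (D x)) => Dx.
    by have [U [FU Ux]] := Hcov x Dx; exists U; split => //; left.
  by have [U [OU Ux HU]] := Hcl x Dx; exists U; split => //; right.
have [s [H1 H2]] := HC F' HF' Hc'.
have [s' [H1' H2']] := list_filter_ex F s.
exists s'; split => // x Dx.
have [U [Us Ux]] := H2 x (HDC x Dx).
exists U; split => //; apply: H2' => //.
by case: (H1 U Us) => // [[_ HU]]; exfalso; apply: (HU x).
Qed.

Lemma compact_closed (T : Type) (O : gset (gset T)) (C : gset T) x :
  is_topology O -> hausdorff O -> compact O C -> ~ C x ->
  exists U, [/\ O U, U x & forall z, U z -> ~ C z].
Proof.
move=> [Otop [Oint _]] Hh HC nCx.
pose F := fun V => O V /\ exists U, [/\ O U, U x & forall z, U z -> V z -> False].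
have HF : forall U, F U -> O U by move=> U [].
have Hc : forall c, C c -> exists U, F U /\ U c.
  move=> c Cc.
  have xc : x <> c by move=> E; apply: nCx; rewrite E.
  have [U [V [OU OV Ux Vc HUV]]] := Hh x c xc.
  by exists V; split => //; split => //; exists U; split.
have [s [H1 H2]] := HC F HF Hc.
have : exists U, [/\ O U, U x & forall V, List.In V s -> forall z, U z -> V z -> False].
  elim: s H1 {H2} => [|V s IH] Hs.
    by exists (fun _ => True); split.
  have [U [OU Ux HU]] := IH (fun W Ws => Hs W (or_intror Ws)).
  have [_ [U' [OU' U'x HU']]] := Hs V (or_introl erefl).
  exists (fun z => U z /\ U' z); split => //; first by apply: Oint.
  move=> W [<-|Ws] z [Uz U'z]; first by apply: HU'.
  by apply: (HU W Ws z).
move=> [U [OU Ux HU]]; exists U; split => // z Uz Cz.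
have [V [Vs Vz]] := H2 z Cz.
by apply: (HU V Vs z).
Qed.

Lemma precompact_sub (T : Type) (O : gset (gset T)) (C X : gset T) :
  is_topology O -> hausdorff O -> compact O C -> (forall x, X x -> C x) ->
  precompact O X.
Proof.
move=> Ht Hh HC HXC.
apply: (closed_sub_compact HC); last by apply: closure_compl.
move=> x clx; apply: NNPP => nCx.
have [U [OU Ux HU]] := compact_closed Ht Hh HC nCx.
have [y [Uy Xy]] := clx U OU Ux.
by apply: (HU y Uy); apply: HXC.
Qed.

Lemma precompact_mono (T : Type) (O : gset (gset T)) (X Y : gset T) :
  is_topology O -> hausdorff O -> precompact O Y -> (forall x, X x -> Y x) ->
  precompact O X.
Proof.
move=> Ht Hh HY HXY; apply: (precompact_sub Ht Hh HY).
move=> x Xx U OU Ux; exists x; split => //; by apply: HXY.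
Qed.


Lemma gt_inter (G : zmodType) (O : gset (gset G)) U V :
  group_topology O -> O U -> O V -> O (fun x => U x /\ V x).
Proof. by move=> [[_ [H _]] _]; apply: H. Qed.

Lemma gt_top (G : zmodType) (O : gset (gset G)) :
  group_topology O -> O (fun _ => True).
Proof. by move=> [[H _] _]. Qed.

Lemma neg_open (G : zmodType) (O : gset (gset G)) W :
  group_topology O -> O W -> O (fun z => W (- z)).
Proof.
move=> HG OW; have [Ht Hc] := HG; apply: open_local => // z Wz.
have [U [V [OU OV U0 Vz HUV]]] := Hc 0 z W OW ltac:(by rewrite sub0r).
exists V; split => // v Vv.
by rewrite -sub0r; apply: HUV.
Qed.

Lemma half_nbhd (G : zmodType) (O : gset (gset G)) W :
  group_topology O -> O W -> W 0 ->
  exists Z, [/\ O Z, Z 0 & forall u v, Z u -> Z v -> W (u + v)].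
Proof.
move=> HG OW W0; have [Ht Hc] := HG.
have [U [V [OU OV U0 V0 HUV]]] := Hc 0 0 W OW ltac:(by rewrite subr0).
exists (fun z => U z /\ V (- z)); split.
- exact: (gt_inter HG OU (neg_open HG OV)).
- by split => //; rewrite oppr0.
- move=> u v [Uu _] [_ Vv]; rewrite -(opprK v); by apply: HUV.
Qed.

Lemma conv_neg (G : zmodType) (O : gset (gset G)) (a : nat -> G) :
  group_topology O -> converges O a 0 -> converges O (fun n => - a n) 0.
Proof.
move=> HG Ha U OU U0.
have [N HN] := Ha (fun z => U (- z)) (neg_open HG OU) ltac:(by rewrite /= oppr0).
by exists N.
Qed.

Lemma conv_pm (G : zmodType) (O : gset (gset G)) (a : nat -> G) U :
  group_topology O -> converges O a 0 -> O U -> U 0 ->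
  exists N, forall n, (N <= n)%N -> U (a n) /\ U (- a n).
Proof.
move=> HG Ha OU U0.
have [N1 H1] := Ha U OU U0.
have [N2 H2] := conv_neg HG Ha OU U0.
exists (maxn N1 N2) => n Hn; split.
- by apply: H1; apply: leq_trans Hn; apply: leq_maxl.
- by apply: H2; apply: leq_trans Hn; apply: leq_maxr.
Qed.


Lemma Asum0 (G : zmodType) (a : nat -> G) k : Asum a k 0.
Proof.
elim: k => [|k IH] //=; exists 0, 0; split => //; [by left|by rewrite addr0].
Qed.

Lemma Aset0 (G : zmodType) (a : nat -> G) : Aset a 0.
Proof. by left. Qed.

Lemma Aset_neg (G : zmodType) (a : nat -> G) x : Aset a x -> Aset a (- x).
Proof.
move=> [->|[n [->|->]]]; first by left; rewrite oppr0.
- by right; exists n; right.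
- by right; exists n; left; rewrite opprK.
Qed.

Lemma Asum_neg (G : zmodType) (a : nat -> G) k x : Asum a k x -> Asum a k (- x).
Proof.
elim: k x => [|k IH] x /=; first by move=> ->; rewrite oppr0.
move=> [u [v [Au Av ->]]]; exists (- u), (- v); split.
- exact: Aset_neg.
- exact: IH.
- by rewrite opprD.
Qed.

Lemma Asum_add (G : zmodType) (a : nat -> G) k j x y :
  Asum a k x -> Asum a j y -> Asum a (k + j) (x + y).
Proof.
elim: k x => [|k IH] x /=; first by move=> -> Hy; rewrite add0r.
move=> [u [v [Au Av ->]]] Hy; exists u, (v + y); split => //.
- exact: IH.
- by rewrite addrA.
Qed.

Lemma Asum_mono (G : zmodType) (a : nat -> G) k j x :
  (k <= j)%N -> Asum a k x -> Asum a j x.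
Proof.
move=> /subnKC <- Hx; rewrite -[x]addr0; apply: Asum_add => //; exact: Asum0.
Qed.

Lemma Asum1 (G : zmodType) (a : nat -> G) x : Aset a x -> Asum a 1 x.
Proof. by move=> Ax; exists x, 0; split => //; rewrite addr0. Qed.

Lemma fin_inter (G : zmodType) (O : gset (gset G)) (P : nat -> G -> Prop) N :
  group_topology O ->
  (forall n, (n < N)%N -> exists W, [/\ O W, W 0 & forall w, W w -> P n w]) ->
  exists W, [/\ O W, W 0 & forall n w, (n < N)%N -> W w -> P n w].
Proof.
move=> HG; elim: N => [|N IH] H.
  by exists (fun _ => True); split => //; exact: gt_top.
have [W [OW W0 HW]] := IH (fun n Hn => H n (ltnW Hn)).
have [W' [OW' W'0 HW']] := H N (ltnSn N).
exists (fun z => W z /\ W' z); split => //; first exact: gt_inter.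
move=> n w; rewrite ltnS leq_eqVlt => /orP [/eqP ->|Hn] [Ww W'w].
- exact: HW'.
- exact: HW.
Qed.

Lemma sep_Asum (G : zmodType) (a : nat -> G) (O : gset (gset G)) :
  group_topology O -> hausdorff O -> converges O a 0 ->
  forall k z, ~ Asum a k z ->
  exists W, [/\ O W, W 0 & forall w, W w -> ~ Asum a k (z - w)].
Proof.
move=> HG Hh Ha; elim=> [|k IH] z /= Hz.
  have z0 : z <> 0 by [].
  have [U [V [OU OV Uz V0 HUV]]] := Hh z 0 z0.
  exists V; split => // w Vw E.
  have wz : w = z by apply/eqP; rewrite eq_sym -subr_eq0; apply/eqP.
  by apply: (HUV z) => //; rewrite -wz.
have nz : ~ Asum a k z.
  by move=> Hk; apply: Hz; exists 0, z; split => //; [left|rewrite add0r].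
have [W0 [OW0 W00 HW0]] := IH z nz.
have [Z [OZ Z0 HZ]] := half_nbhd HG OW0 W00.
have [N HN] := conv_pm HG Ha OZ Z0.
have Hfin : forall n, (n < N)%N -> exists W, [/\ O W, W 0 &
    forall w, W w -> ~ Asum a k (z - a n - w) /\ ~ Asum a k (z + a n - w)].
  move=> n _.
  have n1 : ~ Asum a k (z - a n).
    move=> Hk; apply: Hz; exists (a n), (z - a n); split => //.
    - by right; exists n; left.
    - by rewrite addrC subrK.
  have n2 : ~ Asum a k (z + a n).
    move=> Hk; apply: Hz; exists (- a n), (z + a n); split => //.
    - by right; exists n; right.
    - by rewrite addrC addrK.
  have [V1 [OV1 V10 HV1]] := IH _ n1.
  have [V2 [OV2 V20 HV2]] := IH _ n2.
  exists (fun z => V1 z /\ V2 z); split => //; first exact: gt_inter.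
  by move=> w [V1w V2w]; split; [apply: HV1|apply: HV2].
have [W1 [OW1 W10 HW1]] := @fin_inter _ O
  (fun n w => ~ Asum a k (z - a n - w) /\ ~ Asum a k (z + a n - w)) N HG Hfin.
exists (fun z => Z z /\ W1 z); split => //; first exact: gt_inter.
move=> w [Zw W1w] [x [y [Ax Ay E]]].
have Ey : y = z - w - x by rewrite E addrC addKr.
case: Ax => [x0|[n [xn|xn]]]; subst x.
- apply: (HW0 w); first by rewrite -[w]addr0; apply: HZ.
  by move: Ay; rewrite Ey subr0.
- case: (leqP N n) => Hn.
    apply: (HW0 (w + a n)); first by apply: HZ => //; case: (HN n Hn).
    by move: Ay; rewrite Ey opprD addrA.
  case: (HW1 n w Hn W1w) => H1 _; apply: H1.
  by move: Ay; rewrite Ey addrAC.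
- case: (leqP N n) => Hn.
    apply: (HW0 (w - a n)); first by apply: HZ => //; case: (HN n Hn).
    by move: Ay; rewrite Ey opprD addrA.
  case: (HW1 n w Hn W1w) => _ H2; apply: H2.
  by move: Ay; rewrite Ey opprK addrAC.
Qed.


Lemma add_cont (G : zmodType) (O : gset (gset G)) W x y :
  group_topology O -> O W -> W (x + y) ->
  exists U V, [/\ O U, O V, U x, V y & forall u v, U u -> V v -> W (u + v)].
Proof.
move=> HG OW Wxy; have [Ht Hc] := HG.
have [U [V [OU OV Ux Vy HUV]]] := Hc x (- y) W OW ltac:(by rewrite opprK).
exists U, (fun z => V (- z)); split => //; first exact: (neg_open HG OV).
by move=> u v Uu Vv; rewrite -(opprK v); apply: HUV.
Qed.

Lemma list_inter (T : Type) (O : gset (gset T)) (s : list (gset T))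
  (Q : gset T -> T -> Prop) x :
  is_topology O ->
  (forall P, List.In P s -> exists W, [/\ O W, W x & forall z, W z -> Q P z]) ->
  exists W, [/\ O W, W x & forall P z, List.In P s -> W z -> Q P z].
Proof.
move=> [Htop [Hint _]]; elim: s => [|P s IH] H.
  by exists (fun _ => True); split.
have [W [OW Wx HW]] := IH (fun P' HP' => H P' (or_intror HP')).
have [W' [OW' W'x HW']] := H P (or_introl erefl).
exists (fun z => W z /\ W' z); split => //; first exact: Hint.
by move=> P' z [<-|Hs] [Wz W'z]; [apply: HW'|apply: HW].
Qed.

Lemma tube (G : zmodType) (O : gset (gset G)) (C V : gset G) :
  group_topology O -> compact O C -> O V -> (forall c, C c -> V c) ->
  exists W, [/\ O W, W 0 & forall c w, C c -> W w -> V (c + w)].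
Proof.
move=> HG HC OV HCV.
pose F := fun P => O P /\ exists W, [/\ O W, W 0 & forall u w, P u -> W w -> V (u + w)].
have HF : forall P, F P -> O P by move=> P [].
have Hcov : forall c, C c -> exists P, F P /\ P c.
  move=> c Cc.
  have HV0 : V (c + 0) by rewrite addr0; apply: HCV.
  have [U [W [OU OW Uc W0 HUW]]] := add_cont HG OV HV0.
  by exists U; split => //; split => //; exists W; split.
have [s [H1 H2]] := HC F HF Hcov.
have [W [OW W0 HW]] := @list_inter _ O s (fun P w => forall u, P u -> V (u + w)) 0 HG.1
  (fun P HP => match H1 P HP with conj _ (ex_intro W (And3 a b c)) =>
     ex_intro _ W (And3 a b (fun z Wz u Pu => c u z Pu Wz)) end).
exists W; split => // c w Cc Ww.
have [P [Ps Pc]] := H2 c Cc.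
exact: (HW P w Ps Ww c Pc).
Qed.

Lemma compact_seq0 (G : zmodType) (O : gset (gset G)) (a : nat -> G) (s : seq G) :
  compact O (plus_set (fun x => x \in s) (Asum a 0)).
Proof.
move=> F HF Hcov.
elim: s Hcov => [|d s IH] Hcov.
  by exists nil; split => // x [f [y [/=]]].
have [|s1 [H1 H2]] := IH _.
  move=> x [f [y [fs Hy ->]]]; apply: Hcov; exists f, y; split => //.
  by rewrite inE fs orbT.
have [U [FU Ud]] := Hcov d ltac:(by exists d, 0; split => //; [rewrite inE eqxx|rewrite addr0]).
exists (U :: s1); split.
- by move=> V [<-|/H1].
- move=> x [f [y [fs Hy ->]]]; move: Hy => /= ->; rewrite addr0.
  move: fs; rewrite inE => /orP [/eqP ->|fs].
  + by exists U; split => //; left.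
  + have [V [Vs Vf]] := H2 f ltac:(by exists f, 0; split => //; rewrite addr0).
    by exists V; split => //; right.
Qed.

Lemma compact_seq (G : zmodType) (a : nat -> G) (O : gset (gset G)) :
  group_topology O -> converges O a 0 ->
  forall k (s : seq G), compact O (plus_set (fun x => x \in s) (Asum a k)).
Proof.
move=> HG Ha; elim=> [|k IH] s; first exact: compact_seq0.
move=> F HF Hcov.
have Hcov0 : forall x, plus_set (fun x => x \in s) (Asum a k) x -> exists U, F U /\ U x.
  move=> x [f [y [fs Hy ->]]]; apply: Hcov; exists f, y; split => //.
  by exists 0, y; split => //; [left|rewrite add0r].
have [s0 [H01 H02]] := IH s F HF Hcov0.
pose V := fun z => exists U, List.In U s0 /\ U z.
have OV : O V.
  apply: open_local; first exact: HG.1.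
  move=> z [U [Us Uz]]; exists U; split => //; first by apply: HF; apply: H01.
  by move=> z' Uz'; exists U.
have [W [OW W0 HW]] := tube HG (IH s) OV H02.
have [N HN] := conv_pm HG Ha OW W0.
pose s' := s ++ [seq f + a n | f <- s, n <- iota 0 N] ++ [seq f - a n | f <- s, n <- iota 0 N].
have Hcov1 : forall x, plus_set (fun x => x \in s') (Asum a k) x -> exists U, F U /\ U x.
  move=> x [f [y [fs Hy ->]]]; apply: Hcov.
  move: fs; rewrite !mem_cat => /orP [fs|/orP [fs|fs]].
  2: move/(@allpairsP _ _ _ (fun f n => f + a n) _ _ _): fs => [[f' n] [/= f's _ ->]].
  3: move/(@allpairsP _ _ _ (fun f n => f - a n) _ _ _): fs => [[f' n] [/= f's _ ->]].
  - by exists f, y; split => //; exists 0, y; split => //; [left|rewrite add0r].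
  - exists f', (a n + y); split => //; last by rewrite addrA.
    by exists (a n), y; split => //; right; exists n; left.
  - exists f', (- a n + y); split => //; last by rewrite addrA.
    by exists (- a n), y; split => //; right; exists n; right.
have [s1 [H11 H12]] := IH s' F HF Hcov1.
exists (s0 ++ s1); split.
  by move=> U HU; case: (List.in_app_or _ _ _ HU) => [/H01|/H11].
have inl : forall z, (exists U, List.In U s0 /\ U z) -> exists U, List.In U (s0 ++ s1) /\ U z.
  by move=> z [U [Us Uz]]; exists U; split => //; apply: List.in_or_app; left.
have inr : forall z, (exists U, List.In U s1 /\ U z) -> exists U, List.In U (s0 ++ s1) /\ U z.
  by move=> z [U [Us Uz]]; exists U; split => //; apply: List.in_or_app; right.
move=> z [f [xy [fs [x [y [Ax Ay ->]]] ->]]].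
case: Ax => [->|[n [->|->]]].
- by apply: inl; apply: H02; exists f, y; split => //; rewrite add0r.
- case: (leqP N n) => Hn.
    apply: inl; rewrite [a n + y]addrC addrA; apply: HW; last by case: (HN n Hn).
    by exists f, y.
  apply: inr; rewrite addrA; apply: H12; exists (f + a n), y; split => //.
  rewrite !mem_cat; apply/orP; right; apply/orP; left.
  by apply: allpairs_f => //; rewrite mem_iota.
- case: (leqP N n) => Hn.
    apply: inl; rewrite [- a n + y]addrC addrA; apply: HW; last by case: (HN n Hn).
    by exists f, y.
  apply: inr; rewrite addrA; apply: H12; exists (f - a n), y; split => //.
  rewrite !mem_cat; apply/orP; right; apply/orP; right.
  by apply: (allpairs_f (fun f n => f - a n)) => //; rewrite mem_iota.
Qed.


Definition Am (G : zmodType) (a : nat -> G) (p : nat) : gset G :=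
  fun z => z = 0 \/ exists n, (p <= n)%N /\ (z = a n \/ z = - a n).

Fixpoint Tm (G : zmodType) (a : nat -> G) (m : nat -> nat) (i k : nat) : gset G :=
  match k with
  | 0 => fun z => z = 0
  | k.+1 => fun z => exists x y, [/\ Am a (m i) x, Tm a m i.+1 k y & z = x + y]
  end.

Definition Um (G : zmodType) (a : nat -> G) (m : nat -> nat) : gset G :=
  fun z => exists k, Tm a m 0 k z.

Lemma Am_neg (G : zmodType) (a : nat -> G) p x : Am a p x -> Am a p (- x).
Proof.
move=> [->|[n [Hn [->|->]]]]; first by left; rewrite oppr0.
- by right; exists n; split => //; right.
- by right; exists n; split => //; left; rewrite opprK.
Qed.

Lemma Am_mono (G : zmodType) (a : nat -> G) p q x : (p <= q)%N -> Am a q x -> Am a p x.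
Proof.
move=> Hpq [->|[n [Hn H]]]; first by left.
by right; exists n; split => //; apply: leq_trans Hn.
Qed.

Lemma Am_Aset (G : zmodType) (a : nat -> G) p x : Am a p x -> Aset a x.
Proof. by move=> [->|[n [_ H]]]; [left|right; exists n]. Qed.

Lemma Tm0 (G : zmodType) (a : nat -> G) m i k : Tm a m i k 0.
Proof.
elim: k i => [|k IH] i //=; exists 0, 0; split => //; [by left|by rewrite addr0].
Qed.

Lemma Tm_neg (G : zmodType) (a : nat -> G) m i k x : Tm a m i k x -> Tm a m i k (- x).
Proof.
elim: k i x => [|k IH] i x /=; first by move=> ->; rewrite oppr0.
move=> [u [v [Au Av ->]]]; exists (- u), (- v); split.
- exact: Am_neg.
- exact: IH.
- by rewrite opprD.
Qed.

Lemma Tm_pad (G : zmodType) (a : nat -> G) m i k l x :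
  Tm a m i k x -> Tm a m i (k + l) x.
Proof.
elim: k i x => [|k IH] i x /=; first by move=> ->; apply: Tm0.
move=> [u [v [Au Av ->]]]; exists u, v; split => //; exact: IH.
Qed.

Lemma Tm_split (G : zmodType) (a : nat -> G) m i k l z :
  Tm a m i (k + l) z -> exists s t, [/\ Tm a m i k s, Tm a m (i + k) l t & z = s + t].
Proof.
elim: k i z => [|k IH] i z /=.
  by move=> Hz; exists 0, z; split => //; [rewrite addn0|rewrite add0r].
move=> [u [v [Au Av ->]]].
have [s [t [Hs Ht ->]]] := IH _ _ Av.
exists (u + s), t; split.
- by exists u, s.
- by rewrite addnS -addSn.
- by rewrite addrA.
Qed.

Lemma Tm_Asum (G : zmodType) (a : nat -> G) m i k z : Tm a m i k z -> Asum a k z.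
Proof.
elim: k i z => [|k IH] i z //=.
move=> [u [v [Au Av ->]]]; exists u, v; split; [exact: Am_Aset Au|exact: IH Av|by []].
Qed.

Lemma Tm_mono (G : zmodType) (a : nat -> G) m m' i k z :
  (forall j, (m j <= m' j)%N) -> Tm a m' i k z -> Tm a m i k z.
Proof.
move=> Hm; elim: k i z => [|k IH] i z //=.
move=> [u [v [Au Av ->]]]; exists u, v; split; [exact: (Am_mono (Hm i) Au)|exact: IH|by []].
Qed.

Definition dbl (m : nat -> nat) : nat -> nat := fun i => maxn (m i.*2) (m i.*2.+1).

Lemma Tm_double (G : zmodType) (a : nat -> G) m i k x y :
  Tm a (dbl m) i k x -> Tm a (dbl m) i k y -> Tm a m i.*2 k.*2 (x + y).
Proof.
elim: k i x y => [|k IH] i x y /=; first by move=> -> ->; rewrite addr0.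
move=> [u [v [Au Av ->]]] [u' [v' [Au' Av' ->]]].
exists u, (u' + (v + v')); split.
- by apply: (Am_mono _ Au); apply: leq_maxl.
- exists u', (v + v'); split.
  + by apply: (Am_mono _ Au'); apply: leq_maxr.
  + by rewrite -doubleS; apply: IH.
  + by [].
- by rewrite -!addrA [v + (u' + v')]addrCA.
Qed.

Lemma Um0 (G : zmodType) (a : nat -> G) m : Um a m 0.
Proof. by exists 0%N. Qed.

Lemma Um_neg (G : zmodType) (a : nat -> G) m x : Um a m x -> Um a m (- x).
Proof. by move=> [k Hk]; exists k; apply: Tm_neg. Qed.

Lemma Um_double (G : zmodType) (a : nat -> G) m x y :
  Um a (dbl m) x -> Um a (dbl m) y -> Um a m (x + y).
Proof.
move=> [k Hk] [l Hl]; exists (maxn k l).*2.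
rewrite -[0%N]/(0.*2)%N; apply: Tm_double.
- by rewrite -(subnKC (leq_maxl k l)); apply: Tm_pad.
- by rewrite -(subnKC (leq_maxr k l)); apply: Tm_pad.
Qed.

Lemma Um_sub (G : zmodType) (a : nat -> G) m x y :
  Um a (dbl m) x -> Um a (dbl m) y -> Um a m (x - y).
Proof. by move=> Hx Hy; apply: Um_double => //; apply: Um_neg. Qed.

Lemma Um_dbl (G : zmodType) (a : nat -> G) m x : Um a (dbl m) x -> Um a m x.
Proof. by move=> Hx; rewrite -[x]addr0; apply: Um_double => //; apply: Um0. Qed.


Definition OU (G : zmodType) (a : nat -> G) : gset (gset G) :=
  fun W => forall x, W x -> exists m, forall u, Um a m u -> W (x + u).

Definition Iset (G : zmodType) (a : nat -> G) m (c : G) : gset G :=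
  fun z => exists m', forall u, Um a m' u -> Um a m (z + u - c).

Lemma Iset_open (G : zmodType) (a : nat -> G) m c : OU a (Iset a m c).
Proof.
move=> z [m' Hm']; exists (dbl m') => u Hu; exists (dbl m') => u' Hu'.
rewrite -[z + u + u']addrA; apply: Hm'; exact: Um_double.
Qed.

Lemma Iset_c (G : zmodType) (a : nat -> G) m c : Iset a m c c.
Proof.
by exists (dbl m) => u Hu; rewrite addrC addKr; apply: Um_dbl.
Qed.

Lemma Iset_sub (G : zmodType) (a : nat -> G) m c z : Iset a m c z -> Um a m (z - c).
Proof. by move=> [m' Hm']; rewrite -[z]addr0; apply: Hm'; apply: Um0. Qed.

Lemma OU_group (G : zmodType) (a : nat -> G) : group_topology (OU a).
Proof.
split; first split.
- by move=> x _; exists (fun _ => 0%N).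
- split.
  + move=> U V HU HV x [Ux Vx].
    have [m1 H1] := HU x Ux; have [m2 H2] := HV x Vx.
    exists (fun i => maxn (m1 i) (m2 i)) => u Hu; split.
    * apply: H1; case: Hu => k Hk; exists k; apply: (Tm_mono _ Hk) => j; exact: leq_maxl.
    * apply: H2; case: Hu => k Hk; exists k; apply: (Tm_mono _ Hk) => j; exact: leq_maxr.
  + move=> F HF x [U [FU Ux]].
    have [m Hm] := HF U FU x Ux.
    by exists m => u Hu; exists U; split => //; apply: Hm.
- move=> x y W HW Wxy.
  have [m Hm] := HW _ Wxy.
  exists (Iset a (dbl m) x), (Iset a (dbl m) y); split; try exact: Iset_open; try exact: Iset_c.
  move=> u v /Iset_sub Hu /Iset_sub Hv.
  have := Hm _ (Um_sub Hu Hv).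
  congr W.
  by rewrite opprB addrCA [x - y + _]addrA subrK [u - x + _]addrA subrK.
Qed.

Lemma OU_conv (G : zmodType) (a : nat -> G) : converges (OU a) a 0.
Proof.
move=> W HW W0; have [m Hm] := HW 0 W0.
exists (m 0%N) => n Hn; rewrite -[a n]add0r; apply: Hm.
exists 1%N; exists (a n), 0; split => //; last by rewrite addr0.
by right; exists n; split => //; left.
Qed.


Lemma pigeon (T : Type) (s : list (gset T)) (x : nat -> T) N :
  (forall n, (N <= n)%N -> exists V, List.In V s /\ V (x n)) ->
  exists j n V, [/\ (j < n)%N, List.In V s, V (x j) & V (x n)].
Proof.
elim: s N => [|V s IH] N H.
  by have [V [[] _]] := H N (leqnn N).
case: (classic (exists n1, (N <= n1)%N /\ V (x n1))) => [[n1 [Hn1 Vn1]]|nV].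
  case: (classic (exists n2, (n1 < n2)%N /\ V (x n2))) => [[n2 [Hn2 Vn2]]|nV2].
    by exists n1, n2, V; split => //; left.
  have [|j [n [V' [Hjn Hs Vj Vn]]]] := IH n1.+1.
    move=> n Hn; have [V' [[<-|Hs] V'n]] := H n (leq_trans (leq_trans Hn1 (leqnSn n1)) Hn).
      by exfalso; apply: nV2; exists n.
    by exists V'.
  by exists j, n, V'; split => //; right.
have [|j [n [V' [Hjn Hs Vj Vn]]]] := IH N.
  move=> n Hn; have [V' [[<-|Hs] V'n]] := H n Hn.
    by exfalso; apply: nV; exists n.
  by exists V'.
by exists j, n, V'; split => //; right.
Qed.

Lemma tau_Iset (G : zmodType) (a : nat -> G) (O : gset (gset G)) m c :
  is_tau a O -> O (Iset a m c).
Proof.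
move=> [_ _ Hmax]; apply: (Hmax (OU a)); [exact: OU_group|exact: OU_conv|exact: Iset_open].
Qed.

Lemma choice_fun (A B : Type) (P : A -> B -> Prop) :
  (forall x, exists y, P x y) -> exists f : A -> B, forall x, P x (f x).
Proof.
move=> H; exists (fun x => proj1_sig (constructive_indefinite_description _ (H x))).
by move=> x; case: (constructive_indefinite_description _ (H x)).
Qed.

Lemma main_cover (G : zmodType) (a : nat -> G) (O : gset (gset G)) (X : gset G) :
  is_tau a O -> hausdorff O -> precompact O X ->
  exists (s : seq G) n, forall z, X z -> plus_set (fun x => x \in s) (Asum a n) z.
Proof.
move=> Htau Hh HX; have [HG Ha _] := Htau.
apply: NNPP => Hno.
have H : forall (s : seq G) (n : nat), exists z, X z /\ ~ plus_set (fun x => x \in s) (Asum a n) z.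
  move=> s n; apply: NNPP => H1; apply: Hno; exists s, n => z Xz.
  by apply: NNPP => H2; apply: H1; exists z.
have [pick Hpick] := @choice_fun _ _ (fun (p : seq G * nat) z =>
  X z /\ ~ plus_set (fun x => x \in p.1) (Asum a p.2) z) (fun p => H p.1 p.2).
pose fix xs n := if n is n'.+1 then rcons (xs n') (pick (xs n', n')) else [::].
pose x n := pick (xs n, n).
have xs_in : forall j n, (j < n)%N -> x j \in xs n.
  move=> j; elim=> [|n IH] //; rewrite ltnS leq_eqVlt => /orP [/eqP ->|Hj] /=.
    by rewrite mem_rcons mem_head.
  by rewrite mem_rcons in_cons (IH Hj) orbT.
have Xx : forall n, X (x n) by move=> n; case: (Hpick (xs n, n)).
have Hx : forall j n, (j < n)%N -> ~ Asum a n (x n - x j).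
  move=> j n Hjn HA; case: (Hpick (xs n, n)) => _; apply.
  by exists (x j), (x n - x j); split => //; [exact: xs_in|rewrite addrC subrK].
have [Wf HWf] := @choice_fun nat (gset G) (fun n W => [/\ O W, W 0 &
    forall j w, (j < n)%N -> W w -> ~ Asum a n (x n - x j - w)])
  (fun n => @fin_inter _ O (fun j w => ~ Asum a n (x n - x j - w)) n HG
     (fun j Hj => sep_Asum HG Hh Ha (Hx j n Hj))).
pose P0 := fun (P : gset G) Z => O P /\ P 0 -> [/\ O Z, Z 0 & forall u v, Z u -> Z v -> P (u + v)].
have [h Hh2] : exists h : gset G -> gset G, forall P, P0 P (h P).
  apply: (@choice_fun _ _ P0) => P.
  case: (classic (O P /\ P 0)) => [[OP P0']|nP].
    by have [Z HZ] := half_nbhd HG OP P0'; exists Z.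
  by exists P.
pose fix Zs n := if n is n'.+1 then h (fun z => Zs n' z /\ Wf n z) else h (Wf 0%N).
have HZ : forall n, [/\ O (Zs n), Zs n 0, (forall u v, Zs n u -> Zs n v -> Wf n (u + v))
    & (forall u v, Zs n.+1 u -> Zs n.+1 v -> Zs n (u + v))].
  elim=> [|n [IH1 IH2 IH3 IH4]].
  - have [OW W0 _] := HWf 0%N.
    have [O0 Z0 H0] := Hh2 (Wf 0%N) (conj OW W0).
    have [OW1 W10 _] := HWf 1%N.
    have [O1 Z1 H1] := Hh2 (fun z => Zs 0%N z /\ Wf 1%N z) (conj (gt_inter HG O0 OW1) (conj Z0 W10)).
    by split => // u v Zu Zv; case: (H1 u v Zu Zv).
  - have [OW W0 _] := HWf n.+2.
    have [OW1 W10 _] := HWf n.+1.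
    have [O1 Z1 H1] := Hh2 (fun z => Zs n z /\ Wf n.+1 z) (conj (gt_inter HG IH1 OW1) (conj IH2 W10)).
    have [O2 Z2 H2] := Hh2 (fun z => Zs n.+1 z /\ Wf n.+2 z) (conj (gt_inter HG O1 OW) (conj Z1 W0)).
    split => //.
    + by move=> u v Zu Zv; case: (H1 u v Zu Zv).
    + by move=> u v Zu Zv; case: (H2 u v Zu Zv).
have [m Hm] := @choice_fun nat nat (fun n N => forall k, (N <= k)%N -> Zs n (a k) /\ Zs n (- a k))
  (fun n => let: And4 O1 Z1 _ _ := HZ n in conv_pm HG Ha O1 Z1).
have HAm : forall n z, Am a (m n) z -> Zs n z.
  move=> n z [->|[k [Hk [->|->]]]]; first by case: (HZ n).
  - by case: (Hm n k Hk).
  - by case: (Hm n k Hk).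
have Htail : forall l n t, Tm a m n l t -> exists u v, [/\ Zs n u, Zs n v & t = u + v].
  elim=> [|l IH] n t /=.
    by move=> ->; exists 0, 0; case: (HZ n) => _ Z0 _ _; split => //; rewrite addr0.
  move=> [y [t' [Ay Ht' ->]]].
  have [u [v [Zu Zv ->]]] := IH _ _ Ht'.
  exists y, (u + v); split => //; first exact: HAm.
  by case: (HZ n) => _ _ _; apply.
have Hkey : forall j n, (j < n)%N -> ~ Um a m (x n - x j).
  move=> j n Hjn [k Hk].
  have := Tm_pad n Hk; rewrite addnC => /Tm_split [s0 [t [Hs Ht E]]].
  have [u [v [Zu Zv Et]]] := Htail _ _ _ Ht.
  have [_ _ HW] := HWf n.
  apply: (HW j t Hjn); first by rewrite Et; case: (HZ n) => _ _ H3 _; apply: H3.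
  by rewrite E addrK; apply: Tm_Asum Hs.
pose F := fun V => exists c, V = Iset a (dbl m) c.
have HF : forall V, F V -> O V by move=> V [c ->]; apply: tau_Iset.
have Hcov : forall c, closure O X c -> exists V, F V /\ V c.
  by move=> c _; exists (Iset a (dbl m) c); split; [exists c|apply: Iset_c].
have [s [H1 H2]] := HX F HF Hcov.
have [|j [n [V [Hjn Vs Vj Vn]]]] := @pigeon _ s x 0%N.
  move=> n _; apply: H2 => U OU Ux; exists (x n); split => //.
have [c Ec] := H1 V Vs; rewrite Ec in Vj Vn.
apply: (Hkey j n Hjn).
have := Um_sub (Iset_sub Vn) (Iset_sub Vj).
by rewrite opprB addrA subrK.
Qed.


Lemma tau_hausdorff (G : zmodType) (a : nat -> G) (O : gset (gset G)) :
  T_sequence a -> is_tau a O -> hausdorff O.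
Proof.
move=> [O' [HG' Hh' Ha']] [_ _ Hmax] x y xy.
have [U [V [OU OV Ux Vy HUV]]] := Hh' x y xy.
by exists U, V; split => //; apply: (Hmax O').
Qed.

Lemma precompact_seq (G : zmodType) (a : nat -> G) (O : gset (gset G)) (s : seq G) n :
  is_tau a O -> hausdorff O -> precompact O (plus_set (fun x => x \in s) (Asum a n)).
Proof.
move=> [HG Ha _] Hh; have HC := compact_seq HG Ha (k:=n) (s:=s).
have Ht : is_topology O by case: HG.
exact: (precompact_sub Ht Hh HC).
Qed.

Lemma finite_seq (G : zmodType) (F : gset G) (A : gset G) :
  finite_set F -> exists s : seq G, plus_set F A = plus_set (fun x => x \in s) A.
Proof.
move=> [s Hs]; exists s; apply: gset_ext => z; split.
- by move=> [f [y [Ff Ay ->]]]; exists f, y; split => //; apply/Hs.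
- by move=> [f [y [Ff Ay ->]]]; exists f, y; split => //; apply/Hs.
Qed.

Lemma conv_compact (G : zmodType) (O : gset (gset G)) (s : nat -> G) l :
  converges O s l -> compact O (fun z => z = l \/ exists n, z = s n).
Proof.
move=> Hs F HF Hcov.
have [U [FU Ul]] := Hcov l (or_introl erefl).
have [N HN] := Hs U (HF U FU) Ul.
have : exists L : list (gset G), (forall V, List.In V L -> F V) /\
    forall n, (n < N)%N -> exists V, List.In V L /\ V (s n).
  elim: N {HN} => [|N [L [HL1 HL2]]]; first by exists nil.
  have [V [FV Vn]] := Hcov (s N) (or_intror (ex_intro _ N erefl)).
  exists (V :: L); split; first by move=> W [<-|/HL1].
  move=> n; rewrite ltnS leq_eqVlt => /orP [/eqP ->|Hn]; first by exists V; split => //; left.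
  by have [W [WL Wn]] := HL2 n Hn; exists W; split => //; right.
move=> [L [HL1 HL2]]; exists (U :: L); split; first by move=> W [<-|/HL1].
move=> z [->|[n ->]]; first by exists U; split => //; left.
case: (leqP N n) => Hn; first by exists U; split => //; [left|apply: HN].
by have [W [WL Wn]] := HL2 n Hn; exists W; split => //; right.
Qed.

Definition Dif (G : zmodType) (A B : gset G) : gset G :=
  fun z => exists x y, [/\ A x, B y & z = x - y].

Lemma ideal_FA (G : zmodType) (a : nat -> G) (I : gset (gset G)) (s : seq G) n :
  group_ideal I -> I (fun z => z = 0 \/ exists n, z = a n) ->
  I (plus_set (fun x => x \in s) (Asum a n)).
Proof.
move=> [Hfin Hdif Hsub] HB.
have I0 : I (fun z => z = 0) by apply: Hfin; exists [:: 0] => z; rewrite inE; split => [->|/eqP].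
have IA : I (Aset a).
  apply: (Hsub _ _ (Hdif _ _ HB HB)) => z [->|[k [->|->]]].
  - by exists 0, 0; split => //; [left|left|rewrite subr0].
  - by exists (a k), 0; split => //; [right; exists k|left|rewrite subr0].
  - by exists 0, (a k); split => //; [left|right; exists k|rewrite sub0r].
have IAn : forall n, I (Asum a n).
  elim=> [|k IH] //=.
  apply: (Hsub _ _ (Hdif _ _ IA (Hdif _ _ I0 IH))) => z [x [y [Ax Ay ->]]].
  by exists x, (0 - y); split => //; [exists 0, y|rewrite sub0r opprK].
apply: (Hsub _ _ (Hdif _ _ (Hfin (fun x => x \in s) (ex_intro _ s (fun _ => iff_refl _)))
          (Hdif _ _ I0 (IAn n)))).
move=> z [f [y [fs Ay ->]]].
by exists f, (0 - y); split => //; [exists 0, y|rewrite sub0r opprK].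
Qed.


Unset Implicit Arguments.
Set Strict Implicit.

Theorem theorem1 (G : zmodType) (a : nat -> G) (O : gset (gset G)) :
  T_sequence a -> is_tau a O ->
  ((forall F n, finite_set F -> precompact O (plus_set F (Asum a n))) /\
   (forall X, precompact O X ->
      exists F n, finite_set F /\ forall z, X z -> plus_set F (Asum a n) z) /\
   (forall X, precompact O X <-> S_ideal O X)) /\
  (generated_by a ->
     (forall n, precompact O (Asum a n)) /\
     (forall X, precompact O X -> exists n, forall z, X z -> Asum a n z)).
Proof.
move=> HT Htau.
have Hh := tau_hausdorff HT Htau.
have [HG Ha _] := Htau.
have Ht : is_topology O by case: HG.
have P1 : forall F n, finite_set F -> precompact O (plus_set F (Asum a n)).
  move=> F n HF; have [s ->] := @finite_seq G F (Asum a n) HF.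
  exact: precompact_seq.
have P2 : forall X, precompact O X ->
    exists (s : seq G) n, forall z, X z -> plus_set (fun x => x \in s) (Asum a n) z.
  by move=> X HX; exact: (main_cover Htau Hh HX).
split; [split; [exact: P1|split]|].
- move=> X /P2 [s [n Hs]]; exists (fun x => x \in s), n; split => //.
  by exists s.
- move=> X; split.
  + move=> /P2 [s [n Hs]] I HI Hconv.
    have HFA := ideal_FA s n HI (Hconv a 0 Ha).
    by case: HI => _ _ Hsub; apply: (Hsub _ _ HFA).
  + move=> HX; apply: HX.
    * split.
      - move=> X' HX'; apply: (precompact_mono Ht Hh (P1 X' 0%N HX')).
        by move=> z Xz; exists z, 0; split => //; rewrite addr0.
      - move=> A B /P2 [sA [nA HA]] /P2 [sB [nB HB]].
        apply: (precompact_mono Ht Hh (precompact_seq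
             (s := [seq f - g | f <- sA, g <- sB]) (n := (nA + nB)%N) Htau Hh)).
        move=> z [x [y [Ax By ->]]].
        have [f [u [fs Au ->]]] := HA x Ax.
        have [g [v [gs Bv ->]]] := HB y By.
        exists (f - g), (u - v); split.
        + exact: (allpairs_f (fun f g => f - g)).
        + by apply: Asum_add => //; apply: Asum_neg.
        + by rewrite opprD addrACA.
      - by move=> A C HA HCA; apply: (precompact_mono Ht Hh HA).
    * move=> s l Hs; apply: (precompact_sub Ht Hh (conv_compact Hs)) => //.
- move=> Hgen.
  have Hk : forall x, exists k, Asum a k x.
    apply: Hgen.
    + by exists 0%N.
    + move=> x y [k Hx] [j Hy]; exists (k + j)%N.
      by apply: Asum_add => //; apply: Asum_neg.
    + by move=> n; exists 1%N; apply: Asum1; right; exists n; left.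
  split.
  + move=> n; apply: (precompact_mono Ht Hh (precompact_seq (s := [:: 0]) (n := n) Htau Hh)).
    by move=> z Hz; exists 0, z; split => //; [rewrite inE|rewrite add0r].
  + move=> X /P2 [s [n Hs]].
    have [K HK] : exists K, forall f, f \in s -> Asum a K f.
      elim: s {Hs} => [|f s [K HK]]; first by exists 0%N.
      have [k Hf] := Hk f.
      exists (maxn k K) => g; rewrite inE => /orP [/eqP ->|gs].
      * by apply: (Asum_mono (leq_maxl k K)).
      * by apply: (Asum_mono (leq_maxr k K)); apply: HK.
    exists (K + n)%N => z /Hs [f [u [fs Au ->]]].
    by apply: Asum_add => //; apply: HK.
Qed.
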